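(* Let $W$ be a finite Weyl group with set $R$ of simple reflections, and for $r\in R$ let $\alpha_r$ be the corresponding simple root. Let $\tilde W=W\ltimes Z$ be the affine Weyl group. Suppose $a\in W_I$ for some $I\subseteq R$. If $(a,\mathbf u)\in\tilde W$ is an involution, with $\mathbf u=\sum_{r\in R}u_r\alpha_r$, then $a$ is an involution and $u_r=0$ whenever $r\notin I$. Moreover, let $J$ be the set of reflections $s\in R$ that commute with all $r\in I$. If $\mathbf v=\sum_{s\in J}v_s\alpha_s$, then $\mathbf v^b=\mathbf v$ for all $b\in W_I$.
   Context: $W$ has root system $\Phi$ in a Euclidean space $V$; $\alpha^\vee=2\alpha/\langle\alpha,\alpha\rangle$; $Z$ is the coroot lattice $L(\Phi^\vee)$ viewed as translations. $\tilde W$ consists of pairs $(a,\mathbf u)$, $a\in W$, $\mathbf u\in Z$, with multiplication $(a,\mathbf u)(b,\mathbf v)=(ab,\mathbf u^b+\mathbf v)$, where $\mathbf u\mapsto\mathbf u^b$ is the (right) linear action of $W$ on $V$, so that $\mathbf v^r=\mathbf v-\langle\mathbf v,\alpha_r\rangle\alpha_r^\vee$ for $r\in R$. $W_I$ is the standard parabolic subgroup generated by $I$. The coefficients $u_r,v_s$ are real numbers. *)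

(* Defs.v *)
From HB Require Import structures.
From mathcomp Require Import all_boot all_order all_algebra.
Set Implicit Arguments. Unset Strict Implicit. Unset Printing Implicit Defensive.
Import Order.TTheory GRing.Theory Num.Theory.
Local Open Scope ring_scope.

Section Weyl.
Variables (R : realFieldType) (n : nat).
Implicit Types (u v b : 'rV[R]_n) (x y : 'M[R]_n).

Definition dot u v : R := (u *m v^T) 0 0.

Definition coroot b : 'rV[R]_n := (2 / dot b b) *: b.

(* matrix of the reflection s_b acting on the right on row vectors:
   v *m refl b = v - <v,b> b^vee *)
Definition refl b : 'M[R]_n := 1%:M - b^T *m coroot b.

(* (finite, crystallographic, reduced) root system spanning V *)
Definition root_system (Phi : seq 'rV[R]_n) : Prop :=
  [/\ 0 \notin Phi,
      (forall v, exists c : 'I_(size Phi) -> R,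
          v = \sum_(i < size Phi) c i *: Phi`_i),
      (forall a b, a \in Phi -> b \in Phi -> b *m refl a \in Phi),
      (forall a b, a \in Phi -> b \in Phi ->
          exists k : int, dot b (coroot a) = k%:~R) &
      (forall a (c : R), a \in Phi -> c *: a \in Phi -> c = 1 \/ c = -1)].

Definition simple_system (Phi : seq 'rV[R]_n) (S : finType) (alpha : S -> 'rV[R]_n)
  : Prop :=
  [/\ (forall s, alpha s \in Phi),
      (forall c : S -> R, \sum_s c s *: alpha s = 0 -> forall s, c s = 0) &
      (forall b, b \in Phi -> exists k : S -> nat,
          b = \sum_s (k s)%:R *: alpha s \/ b = - \sum_s (k s)%:R *: alpha s)].

(* group generated by a set G of involutive matrices (products of generators) *)
Inductive gen (G : 'M[R]_n -> Prop) : 'M[R]_n -> Prop :=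
| gen_one : gen G 1%:M
| gen_mul x y : gen G x -> G y -> gen G (x *m y).

Definition in_W (Phi : seq 'rV[R]_n) x : Prop :=
  gen (fun y => exists2 b, b \in Phi & y = refl b) x.

Definition in_WI (S : finType) (alpha : S -> 'rV[R]_n) (I : {set S}) x : Prop :=
  gen (fun y => exists2 s, s \in I & y = refl (alpha s)) x.

Definition in_coroot_lattice (Phi : seq 'rV[R]_n) u : Prop :=
  exists c : 'I_(size Phi) -> int, u = \sum_(i < size Phi) (c i)%:~R *: coroot Phi`_i.

Definition aff_mul (p q : 'M[R]_n * 'rV[R]_n) : 'M[R]_n * 'rV[R]_n :=
  (p.1 *m q.1, p.2 *m q.1 + q.2).
Definition aff_one : 'M[R]_n * 'rV[R]_n := (1%:M, 0).

Definition in_affW (Phi : seq 'rV[R]_n) (p : 'M[R]_n * 'rV[R]_n) : Prop :=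
  in_W Phi p.1 /\ in_coroot_lattice Phi p.2.

Definition mx_involution x : Prop := x *m x = 1%:M /\ x <> 1%:M.
Definition aff_involution (p : 'M[R]_n * 'rV[R]_n) : Prop :=
  aff_mul p p = aff_one /\ p <> aff_one.

Definition Jset (S : finType) (alpha : S -> 'rV[R]_n) (I : {set S}) : {set S} :=
  [set s | (s \notin I) &&
     [forall r in I, refl (alpha s) *m refl (alpha r) == refl (alpha r) *m refl (alpha s)]].

End Weyl.

(* Main.v *)
Set Warnings "-notation-overridden,-ambiguous-paths".
Require Import Defs.
From HB Require Import structures.
From mathcomp Require Import all_boot all_order all_algebra ring.
Import Order.TTheory GRing.Theory Num.Theory.
Local Open Scope ring_scope.

Section H.
Variables (R : realFieldType) (n : nat).
Implicit Types (u v b : 'rV[R]_n).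

Lemma refl_act v b : v *m refl b = v - (dot v b * (2 / dot b b)) *: b.
Proof.
rewrite /refl /coroot mulmxBr mulmx1 mulmxA [v *m b^T]mx11_scalar.
by rewrite mul_scalar_mx scalerA.
Qed.

Lemma dotC u v : dot u v = dot v u.
Proof. rewrite /dot !mxE; apply: eq_bigr => j _; by rewrite !mxE mulrC. Qed.

Lemma dotDl u w v : dot (u + w) v = dot u v + dot w v.
Proof. by rewrite /dot mulmxDl mxE. Qed.

Lemma dotZl c u v : dot (c *: u) v = c * dot u v.
Proof. by rewrite /dot -scalemxAl mxE. Qed.

Lemma dot_suml (S : finType) (P : pred S) (F : S -> 'rV[R]_n) v :
  dot (\sum_(s | P s) F s) v = \sum_(s | P s) dot (F s) v.
Proof.
rewrite /dot mulmx_suml summxE; apply: eq_bigr => s _; by [].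
Qed.

Lemma dot_eq0 b : dot b b = 0 -> b = 0.
Proof.
rewrite /dot mxE => H.
have H0 : forall j, b 0 j * b^T j 0 = 0.
  move=> j; apply: (psumr_eq0P _ H) => // i _.
  by rewrite mxE -expr2 sqr_ge0.
apply/rowP => j; rewrite !mxE; have := H0 j; rewrite mxE.
by move/eqP; rewrite mulf_eq0 orbb => /eqP.
Qed.


Lemma dotNl u v : dot (- u) v = - dot u v.
Proof. by rewrite -scaleN1r dotZl mulN1r. Qed.

Lemma dotBl u w v : dot (u - w) v = dot u v - dot w v.
Proof. by rewrite dotDl dotNl. Qed.

Variables (S : finType) (alpha : S -> 'rV[R]_n).
Hypothesis Hind : forall c : S -> R, \sum_s c s *: alpha s = 0 -> forall s, c s = 0.

Lemma indep2 s r x y : s != r -> x *: alpha s + y *: alpha r = 0 -> x = 0 /\ y = 0.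
Proof.
move=> sr E.
have rs : (r == s) = false by rewrite eq_sym (negbTE sr).
pose c t := if t == s then x else if t == r then y else 0.
have Hc : \sum_t c t *: alpha t = 0.
  rewrite (bigD1 s) //= (bigD1 r) /=; last by rewrite eq_sym.
  rewrite big1 ?addr0; last by move=> t /andP [ts tr]; rewrite /c (negbTE ts) (negbTE tr) scale0r.
  by rewrite /c eqxx rs eqxx.
split; first by have := Hind c Hc s; rewrite /c eqxx.
by have := Hind c Hc r; rewrite /c rs eqxx.
Qed.

Lemma alpha_neq0 s : alpha s != 0.
Proof.
apply/eqP => E.
have := Hind (fun t => if t == s then 1 else 0) _ s.
rewrite eqxx => H; suff: (1:R) = 0 by move/eqP; rewrite oner_eq0.
apply: H.
rewrite (bigD1 s) //= eqxx scale1r E add0r big1 // => t /negbTE ->; by rewrite scale0r.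
Qed.

Lemma orth s r : s != r ->
  refl (alpha s) *m refl (alpha r) = refl (alpha r) *m refl (alpha s) ->
  dot (alpha s) (alpha r) = 0.
Proof.
move=> sr E.
set a := alpha s; set b := alpha r.
have Haa : dot a a != 0 by apply/eqP => /dot_eq0 /eqP; apply/negP/alpha_neq0.
have Hbb : dot b b != 0 by apply/eqP => /dot_eq0 /eqP; apply/negP/alpha_neq0.
have E2 : a *m refl a *m refl b = a *m refl b *m refl a by rewrite -!mulmxA E.
move: E2; rewrite !refl_act.
set a1 := a - _ *: a; set b1 := a - _ *: b => E2.
have E3 : (- (dot a a * (2 / dot a a)) + dot b1 a * (2 / dot a a)) *: a
        + (dot a b * (2 / dot b b) - dot a1 b * (2 / dot b b)) *: b = 0.
  rewrite -(subrr (a1 - (dot a1 b * (2 / dot b b)) *: b)) {2}E2.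
  apply/rowP => j; rewrite /a1 /b1 !mxE; ring.
have [_ H] := @indep2 s r _ _ sr E3.
move: H; rewrite /a1 dotBl dotZl.
have -> : dot a a * (2 / dot a a) = 2 by rewrite mulrC -mulrA mulVf // mulr1.
move=> H.
have H2 : 2 * (dot a b * (2 / dot b b)) = 0 by rewrite -H; ring.
move/eqP: H2; rewrite !mulf_eq0 pnatr_eq0 /= invr_eq0 (negbTE Hbb) /=.
by rewrite orbF => /eqP.
Qed.

End H.

Section W.
Variables (R : realFieldType) (n : nat) (S : finType) (alpha : S -> 'rV[R]_n).

Lemma WI_span I x : in_WI alpha I x -> forall v, exists c : S -> R,
  (forall t, t \notin I -> c t = 0) /\ v *m x = v + \sum_t c t *: alpha t.
Proof.
elim=> [|x0 y _ IH [s sI ->]] v.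
  exists (fun _ => 0); split => //; rewrite mulmx1 big1 ?addr0 // => t _; by rewrite scale0r.
have [c [Hc E]] := IH v.
pose d := dot (v *m x0) (alpha s) * (2 / dot (alpha s) (alpha s)).
exists (fun t => if t == s then c t - d else c t); split.
  move=> t tI; case: eqP => [ts|_]; [by move: tI; rewrite ts sI | exact: Hc].
rewrite mulmxA refl_act -/d E -addrA; congr (_ + _).
rewrite [RHS](bigD1 s) //= eqxx.
rewrite [X in _ = _ + X](eq_bigr (fun t => c t *: alpha t)); last by move=> t /negbTE ->.
by rewrite [in LHS](bigD1 s) //= scalerBl addrAC.
Qed.

End W.
Theorem lemma2p8 (R : realFieldType) (n : nat) (Phi : seq 'rV[R]_n)
  (S : finType) (alpha : S -> 'rV[R]_n) (I : {set S})
  (a : 'M[R]_n) (u : 'rV[R]_n) (ur : S -> R) :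
  root_system Phi -> simple_system Phi alpha ->
  in_WI alpha I a ->
  in_affW Phi (a, u) ->
  u = \sum_r ur r *: alpha r ->
  aff_involution (a, u) ->
  [/\ mx_involution a,
      (forall r, r \notin I -> ur r = 0) &
      (forall (v : S -> R) (b : 'M[R]_n), in_WI alpha I b ->
         (\sum_(s in Jset alpha I) v s *: alpha s) *m b
           = \sum_(s in Jset alpha I) v s *: alpha s)].
Proof.
move=> _ [_ Hind _] HI _ Hu [Hmul Hne].
move: Hmul; rewrite /aff_mul /aff_one /= => -[Haa Hua].
split.
- split=> // a1; apply: Hne; rewrite /aff_one.
  move: Hua; rewrite a1 mulmx1 => Hua.
  have : (2:R) *: u = 0 by rewrite scaler_nat mulr2n.
  by move/eqP; rewrite scaler_eq0 pnatr_eq0 /= => /eqP ->.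
- move=> r rI.
  have [c [Hc E]] := @WI_span _ _ _ _ _ _ HI u.
  have H0 : \sum_t (2 * ur t + c t) *: alpha t = 0.
    under eq_bigr do rewrite scalerDl -scalerA.
    rewrite big_split /= -scaler_sumr -Hu scaler_nat mulr2n; transitivity (u *m a + u); last exact: Hua.
    by rewrite E [RHS]addrAC.
  have := Hind _ H0 r; rewrite Hc // addr0 => /eqP.
  by rewrite mulf_eq0 pnatr_eq0 /= => /eqP.
- move=> v b Hb.
  elim: Hb => [|x y _ IH [r rI ->]]; first by rewrite mulmx1.
  have H0 : \sum_(s in Jset alpha I) dot (v s *: alpha s) (alpha r) = 0.
    apply: big1 => s sJ.
    move: sJ; rewrite inE => /andP [sI /forallP /(_ r)]; rewrite rI /= => /eqP Hc.
    have sr : s != r by apply/eqP => esr; move: sI; rewrite esr rI.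
    by rewrite dotZl (@orth _ _ _ _ Hind _ _ sr Hc) mulr0.
  by rewrite mulmxA IH refl_act dot_suml H0 mul0r scale0r subr0.
Qed.
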